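(* Let $0<a<D$. For every $\omega\in\Omega$ and every nonnegative global solution $(s(t),m_1(t),m_2(t))$, $t\ge0$, of the random chemostat system $$s'(t)=(D+\psi(\xi^*(\theta_t\omega)))(s_{\mathrm{in}}-\alpha s(t))-c\mu(s(t))(m_1(t)+m_2(t))+rd\,m_1(t),$$ $$m_1'(t)=m_1(t)\big(-d-\alpha(D+\psi(\xi^*(\theta_t\omega)))+g\mu(s(t))-r_1m_1(t)-r_2m_2(t)-\alpha_1\big)+\alpha_2m_2(t),$$ $$m_2'(t)=m_2(t)\big(-d+g\mu(s(t))-r_1m_1(t)-r_2m_2(t)-\alpha_2\big)+\alpha_1m_1(t),$$ there exist $T>0$ and $s^*>0$ such that $s(t)\ge s^*$ for all $t\ge T$.
   Context: Let $\Omega$ be the set of continuous functions $\omega:\mathbb{R}\to\mathbb{R}$ with $\omega(0)=0$, with Borel $\sigma$-algebra and Wiener measure, and $\theta_t\omega(\cdot)=\omega(\cdot+t)-\omega(t)$ the Wiener shift. The Ornstein–Uhlenbeck process is $\xi^*(\theta_t\omega)=-\int_{-\infty}^0 e^{s}\,\theta_t\omega(s)\,ds$. For a constant $a>0$, $\psi(\xi)=\frac{2a}{\pi}\arctan(\xi)$. Parameters: $D>0$, $s_{\mathrm{in}}>0$, $\alpha>0$, $c>0$, $g\in(0,c]$, $r\in(0,1)$, $d>0$, $\alpha_1,\alpha_2\ge0$, $r_1,r_2\ge0$. The consumption function $\mu:[0,+\infty)\to[0,+\infty)$ is continuous, $\mu(0)=0$, $\mu(x)>0$ for $x>0$, and $\mu(x)\le1$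 for all $x\ge0$. *)

(* Defs.v *)
From Stdlib Require Import Reals.
From Coquelicot Require Import Coquelicot.
Open Scope R_scope.

(* Omega: continuous paths omega : R -> R with omega 0 = 0
   (the Wiener measure plays no role: the statement is for every omega). *)
Definition in_Omega (w : R -> R) : Prop :=
  (forall x, continuity_pt w x) /\ w 0 = 0.

Definition theta (t : R) (w : R -> R) : R -> R := fun s => w (s + t) - w t.

(* Stationary Ornstein-Uhlenbeck process:
   xi*(w) = - int_{-oo}^0 e^s w(s) ds  (improper Riemann integral). *)
Definition xi_star (w : R -> R) : R :=
  - RInt_gen (fun s => exp s * w s) (Rbar_locally m_infty) (at_point 0).

Definition psi (a xi : R) : R := 2 * a / PI * atan xi.

(* Main.v *)
Require Import Defs.
From Stdlib Require Import Reals.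
From Coquelicot Require Import Coquelicot.
From Stdlib Require Import Lra Psatz.
Open Scope R_scope.


Lemma barrier (f f' : R -> R) (t0 L eps : R) : 0 < eps ->
  (forall t, t0 < t -> derivable_pt_lim f t (f' t)) ->
  (forall t, t0 < t -> f t <= L -> eps <= f' t) ->
  exists T, t0 < T /\ forall t, T <= t -> L <= f t.
Proof.
  intros Heps Hd Hc.
  assert (Hstep : exists t2, t0 < t2 /\ L <= f t2).
  { set (t1 := t0 + 1).
    destruct (Rle_dec L (f t1)) as [H1|H1].
    - exists t1; split; [unfold t1; lra | exact H1].
    - set (q := (L - f t1) / eps).
      assert (Hq : eps * q = L - f t1) by (unfold q; field; lra).
      assert (Hq0 : 0 < q) by (unfold q; apply Rdiv_lt_0_compat; lra).
      set (t := t1 + q + 1).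
      destruct (MVT_cor2 f f' t1 t) as [c0 [Hm Hc0]].
      + unfold t; lra.
      + intros c Hcc; apply Hd; unfold t1 in *; lra.
      + destruct (Rle_dec (f c0) L) as [H2|H2].
        * exists t; split; [unfold t, t1; lra|].
          assert (eps <= f' c0) by (apply Hc; [unfold t1 in *; lra| exact H2]).
          assert (t - t1 = q + 1) by (unfold t; ring).
          rewrite H0 in Hm. nra.
        * exists c0; split; [unfold t1 in *; lra| lra]. }
  destruct Hstep as [t2 [Ht2 HL2]].
  exists t2; split; [exact Ht2|].
  intros t Ht.
  destruct (Rle_dec L (f t)) as [H|H]; [exact H|exfalso].
  assert (Hcont : forall c, t2 <= c <= t -> continuity_pt f c).
  { intros c Hcc. apply derivable_continuous_pt.
    exists (f' c). apply Hd. lra. }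
  destruct (continuity_ab_min f t2 t Ht Hcont) as [u [Hmin Hu]].
  assert (Hfu : f u < L) by (specialize (Hmin t); lra).
  assert (Hut2 : t2 < u).
  { destruct (Req_dec u t2) as [E|E]; [subst u; lra| lra]. }
  assert (Hl : eps <= f' u) by (apply Hc; lra).
  destruct (Hd u ltac:(lra) (f' u / 2) ltac:(lra)) as [del Hdel].
  set (h := - Rmin (del / 2) (u - t2)).
  assert (Hm1 : Rmin (del/2) (u - t2) <= del/2) by apply Rmin_l.
  assert (Hm2 : Rmin (del/2) (u - t2) <= u - t2) by apply Rmin_r.
  assert (Hm3 : 0 < Rmin (del/2) (u - t2)).
  { apply Rmin_pos; [destruct del; simpl; lra| lra]. }
  assert (Hdp := cond_pos del).
  assert (Hh0 : h <> 0) by (unfold h; lra).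
  assert (Hhd : Rabs h < del) by (unfold h; rewrite Rabs_Ropp, Rabs_pos_eq; lra).
  specialize (Hdel h Hh0 Hhd).
  set (qq := (f (u + h) - f u) / h) in Hdel.
  assert (Hqq : qq * h = f (u + h) - f u) by (unfold qq; field; exact Hh0).
  apply Rabs_def2 in Hdel.
  assert (Hmn : f u <= f (u + h)) by (apply Hmin; unfold h; lra).
  assert (h < 0) by (unfold h; lra).
  nra.
Qed.

Theorem proposition4p1
  (a D s_in alpha c g r d alpha1 alpha2 r1 r2 : R) (mu : R -> R)
  (Ha : 0 < a) (HaD : a < D) (HD : 0 < D) (Hsin : 0 < s_in)
  (Halpha : 0 < alpha) (Hc : 0 < c) (Hg : 0 < g) (Hgc : g <= c)
  (Hr0 : 0 < r) (Hr1 : r < 1) (Hd : 0 < d)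
  (Ha1 : 0 <= alpha1) (Ha2 : 0 <= alpha2) (Hr1' : 0 <= r1) (Hr2' : 0 <= r2)
  (Hmu_cont : forall x, 0 <= x ->
     filterlim mu (within (fun y => 0 <= y) (locally x)) (locally (mu x)))
  (Hmu0 : mu 0 = 0)
  (Hmu_pos : forall x, 0 < x -> 0 < mu x)
  (Hmu_nonneg : forall x, 0 <= x -> 0 <= mu x)
  (Hmu_le1 : forall x, 0 <= x -> mu x <= 1) :
  forall (w : R -> R), in_Omega w ->
  forall (s m1 m2 : R -> R),
    (forall t, 0 <= t -> 0 <= s t /\ 0 <= m1 t /\ 0 <= m2 t) ->
    (forall t, 0 < t ->
       is_derive s t
         ((D + psi a (xi_star (theta t w))) * (s_in - alpha * s t)
          - c * mu (s t) * (m1 t + m2 t) + r * d * m1 t)) ->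
    (forall t, 0 < t ->
       is_derive m1 t
         (m1 t * (- d - alpha * (D + psi a (xi_star (theta t w))) + g * mu (s t)
                  - r1 * m1 t - r2 * m2 t - alpha1) + alpha2 * m2 t)) ->
    (forall t, 0 < t ->
       is_derive m2 t
         (m2 t * (- d + g * mu (s t) - r1 * m1 t - r2 * m2 t - alpha2)
          + alpha1 * m1 t)) ->
    exists T s_star, 0 < T /\ 0 < s_star /\ forall t, T <= t -> s_star <= s t.

Proof.
  intros w Hw s m1 m2 Hnn Hs Hm1 Hm2.
  set (Dt := fun t => D + psi a (xi_star (theta t w))).
  assert (HDt : forall t, D - a <= Dt t <= D + a).
  { intro t. unfold Dt, psi. destruct (atan_bound (xi_star (theta t w))) as [b1 b2].
    set (u := atan (xi_star (theta t w))) in *.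
    assert (HPI := PI_RGT_0).
    assert (E : 2 * a / PI * u = a * (u / (PI/2))) by (field; lra).
    rewrite E.
    assert (u / (PI/2) < 1) by (apply (Rmult_lt_reg_r (PI/2)); [lra|]; field_simplify; lra).
    assert (-1 < u / (PI/2)) by (apply (Rmult_lt_reg_r (PI/2)); [lra|]; field_simplify; lra).
    split; nra. }
  set (S' := fun t => Dt t * (s_in - alpha * s t) - c * mu (s t) * (m1 t + m2 t) + r * d * m1 t).
  set (M1' := fun t => m1 t * (- d - alpha * Dt t + g * mu (s t) - r1 * m1 t - r2 * m2 t - alpha1) + alpha2 * m2 t).
  set (M2' := fun t => m2 t * (- d + g * mu (s t) - r1 * m1 t - r2 * m2 t - alpha2) + alpha1 * m1 t).
  assert (Ds : forall t, 0 < t -> derivable_pt_lim s t (S' t)).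
  { intros t Ht; apply is_derive_Reals; exact (Hs t Ht). }
  assert (Dm1 : forall t, 0 < t -> derivable_pt_lim m1 t (M1' t)).
  { intros t Ht; apply is_derive_Reals; exact (Hm1 t Ht). }
  assert (Dm2 : forall t, 0 < t -> derivable_pt_lim m2 t (M2' t)).
  { intros t Ht; apply is_derive_Reals; exact (Hm2 t Ht). }
  set (A := g * (D + a) * s_in).
  assert (HA : 0 < A) by (unfold A; apply Rmult_lt_0_compat; [nra|lra]).
  set (lam := Rmin (alpha * (D - a)) (d * (1 - r))).
  assert (Hl1 : lam <= alpha * (D - a)) by apply Rmin_l.
  assert (Hl2 : lam <= d * (1 - r)) by apply Rmin_r.
  assert (Hl0 : 0 < lam) by (apply Rmin_pos; nra).
  set (K := 2 * A / lam).
  assert (HK : lam * K = 2 * A) by (unfold K; field; lra).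
  assert (HK0 : 0 < K) by (unfold K; apply Rdiv_lt_0_compat; lra).
  destruct (barrier (fun t => - (g * s t + c * (m1 t + m2 t)))
                    (fun t => - (g * S' t + c * (M1' t + M2' t))) 0 (- K) A HA)
    as [T1 [HT1 HV]].
  { intros t Ht.
    apply (derivable_pt_lim_opp (fun t => g * s t + c * (m1 t + m2 t))).
    apply (derivable_pt_lim_plus (fun t => g * s t) (fun t => c * (m1 t + m2 t))).
    - apply (derivable_pt_lim_scal s). auto.
    - apply (derivable_pt_lim_scal (fun t => m1 t + m2 t)).
      apply (derivable_pt_lim_plus m1 m2); auto. }
  { intros t Ht HVt.
    destruct (Hnn t ltac:(lra)) as [hs [h1 h2]].
    destruct (HDt t) as [hD1 hD2].
    unfold S', M1', M2'. cbv beta in HVt |- *.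
    set (X := Dt t) in *. set (y := s t) in *. set (u1 := m1 t) in *. set (u2 := m2 t) in *.
    clearbody X y u1 u2.
    assert (e1 : g * X * s_in <= A) by (unfold A; apply Rmult_le_compat_r; [lra|]; apply Rmult_le_compat_l; lra).
    assert (e2 : lam * g * y <= g * alpha * X * y).
    { assert (0 <= alpha * X - lam) by nra. assert (0 <= g * y) by nra. nra. }
    assert (e3 : lam * c * u1 <= c * d * u1 - g * r * d * u1).
    { assert (0 <= c * d - g * r * d - lam * c).
      { assert (g * r * d <= c * r * d) by (apply Rmult_le_compat_r; [lra|]; apply Rmult_le_compat_r; lra). nra. }
      nra. }
    assert (e4 : lam * c * u2 <= c * d * u2).
    { assert (lam <= d) by nra. assert (0 <= c * u2) by nra. nra. }
    assert (e5 : 0 <= c * alpha * X * u1).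
    { assert (0 <= c * alpha) by nra. assert (0 <= X * u1) by nra. nra. }
    assert (e6 : 0 <= c * (r1 * u1 + r2 * u2) * (u1 + u2)).
    { assert (0 <= r1 * u1 + r2 * u2) by nra. assert (0 <= u1 + u2) by lra. apply Rmult_le_pos; [apply Rmult_le_pos|]; lra. }
    assert (e7 : lam * K <= lam * (g * y + c * (u1 + u2))) by (apply Rmult_le_compat_l; lra).
    nra. }
  assert (Hmb : forall t, T1 <= t -> c * (m1 t + m2 t) <= K).
  { intros t Ht. specialize (HV t Ht). destruct (Hnn t ltac:(lra)) as [hs _]. nra. }
  set (eta := (D - a) * s_in / (4 * K)).
  assert (Heta : 0 < eta) by (unfold eta; apply Rdiv_lt_0_compat; nra).
  assert (HetaK : eta * K = (D - a) * s_in / 4) by (unfold eta; field; lra).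
  destruct (proj1 (filterlim_locally mu (mu 0)) (Hmu_cont 0 (Rle_refl 0)) (mkposreal eta Heta))
    as [d0 Hd0].
  set (del := Rmin (d0 / 2) (s_in / (2 * alpha))).
  assert (Hdp := cond_pos d0).
  assert (Hdel1 : del <= d0 / 2) by apply Rmin_l.
  assert (Hdel2 : del <= s_in / (2 * alpha)) by apply Rmin_r.
  assert (Hdel0 : 0 < del).
  { apply Rmin_pos; [lra| apply Rdiv_lt_0_compat; lra]. }
  assert (Hal : alpha * (s_in / (2 * alpha)) = s_in / 2) by (field; lra).
  destruct (barrier s S' T1 del ((D - a) * s_in / 4) ltac:(nra)) as [T [HT Hfin]].
  { intros t Ht; apply Ds; lra. }
  { intros t Ht Hst.
    destruct (Hnn t ltac:(lra)) as [hs [h1 h2]].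
    destruct (HDt t) as [hD1 hD2].
    assert (Hmu : mu (s t) < eta).
    { assert (B : ball 0 d0 (s t)).
      { change (Rabs (s t - 0) < d0). rewrite Rminus_0_r, Rabs_pos_eq by lra. lra. }
      specialize (Hd0 (s t) B hs). change (Rabs (mu (s t) - mu 0) < eta) in Hd0.
      rewrite Hmu0, Rminus_0_r in Hd0. apply Rabs_def2 in Hd0. lra. }
    specialize (Hmb t ltac:(lra)).
    assert (hm := Hmu_nonneg (s t) hs).
    unfold S'.
    set (X := Dt t) in *. set (y := s t) in *. set (u1 := m1 t) in *. set (u2 := m2 t) in *.
    clearbody X y u1 u2.
    assert (f1 : s_in / 2 <= s_in - alpha * y).
    { assert (alpha * y <= alpha * (s_in / (2 * alpha))) by (apply Rmult_le_compat_l; lra). lra. }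
    assert (f2 : (D - a) * (s_in / 2) <= X * (s_in - alpha * y)).
    { apply Rmult_le_compat; lra. }
    assert (f3 : c * mu y * (u1 + u2) <= eta * K).
    { replace (c * mu y * (u1 + u2)) with (mu y * (c * (u1 + u2))) by ring.
      assert (0 <= c * (u1 + u2)) by nra.
      apply Rmult_le_compat; lra. }
    assert (0 <= r * d * u1) by (apply Rmult_le_pos; nra).
    lra. }
  exists T, del. split; [lra|]. split; [lra|]. exact Hfin.
Qed.
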